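(* Let $R>0$ and let $K\subset\mathbb{R}^2$ be the closed disk of radius $R$ centered at the origin. Let $G\colon\mathbb{R}\to\mathbb{R}$ be twice continuously differentiable with $x^2+G(x)^2>0$ for all $x$, and define $$h(x)=x-\frac{\sqrt{x^2+G(x)^2}-R}{\sqrt{x^2+G(x)^2}}\cdot\frac{x\,(1-G'(x)^2)+2G(x)G'(x)}{1+G'(x)^2}.$$ Suppose $h$ is a bijection from $\mathbb{R}$ onto an open interval $J$ (possibly unbounded) containing $0$, with $h'(x)\ne0$ for all $x$. Then $G$ is an equidistant function (i.e. there is an admissible $f$ such that the equidistant set of $K$ and the epigraph of $f$ is the graph of $G$) if and only if the pair $x(t):=h^{-1}(t)$, $y(t):=G(x(t))$ ($t\in J$) is the equidistant parameterization for the graph of $G$, i.e. there is an admissible $f$ with $D_f=J$ and $x=x_f$, $y=y_f$ on $J$.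
   Context: $d(p,A)=\inf\{|p-q|\mid q\in A\}$ (Euclidean distance). A function $f\colon\mathbb{R}\to(0,\infty)$ is admissible if it is twice continuously differentiable, convex, and $t^2+f(t)^2>R^2$ for all $t$; its epigraph is $L_f=\{(t,y)\mid f(t)\le y\}$, and the equidistant set is $\{K=L_f\}=\{p\mid d(p,K)=d(p,L_f)\}$. For admissible $f$ put $\alpha_f(t)=\frac{tf'(t)-f(t)}{\sqrt{1+f'(t)^2}}$, $D_f=\{t\mid\alpha_f(t)<R\}$, and the equidistant parameterization $x_f,y_f\colon D_f\to\mathbb{R}$, $x_f(t)=t+\frac{f'(t)}{2\sqrt{1+f'(t)^2}}\cdot\frac{t^2+f(t)^2-R^2}{R-\alpha_f(t)}$, $y_f(t)=f(t)-\frac{1}{2\sqrt{1+f'(t)^2}}\cdot\frac{t^2+f(t)^2-R^2}{R-\alpha_f(t)}$. *)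

(* Defs.v *)
From Stdlib Require Import Reals.
From Coquelicot Require Import Coquelicot.
Open Scope R_scope.

Definition pt := (R * R)%type.

Definition edist (p q : pt) : R :=
  sqrt ((fst p - fst q)^2 + (snd p - snd q)^2).

Definition dist_set (p : pt) (A : pt -> Prop) : Rbar :=
  Glb_Rbar (fun r => exists q, A q /\ r = edist p q).

Definition disk (Rr : R) : pt -> Prop := fun q => fst q ^ 2 + snd q ^ 2 <= Rr ^ 2.

Definition epigraph (f : R -> R) : pt -> Prop := fun q => f (fst q) <= snd q.

Definition equidistant_set (A B : pt -> Prop) : pt -> Prop :=
  fun p => dist_set p A = dist_set p B.

Definition C2 (f : R -> R) : Prop :=
  (forall x, ex_derive f x) /\
  (forall x, ex_derive (Derive f) x) /\
  (forall x, continuous (Derive (Derive f)) x).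

Definition convex_fun (f : R -> R) : Prop :=
  forall x y l, 0 <= l <= 1 ->
    f (l * x + (1 - l) * y) <= l * f x + (1 - l) * f y.

Definition admissible (Rr : R) (f : R -> R) : Prop :=
  C2 f /\ convex_fun f /\ (forall t, 0 < f t) /\
  (forall t, t ^ 2 + f t ^ 2 > Rr ^ 2).

Definition alpha_f (f : R -> R) (t : R) : R :=
  (t * Derive f t - f t) / sqrt (1 + (Derive f t) ^ 2).

Definition D_f (Rr : R) (f : R -> R) (t : R) : Prop := alpha_f f t < Rr.

Definition x_f (Rr : R) (f : R -> R) (t : R) : R :=
  t + Derive f t / (2 * sqrt (1 + (Derive f t) ^ 2)) *
      ((t ^ 2 + f t ^ 2 - Rr ^ 2) / (Rr - alpha_f f t)).

Definition y_f (Rr : R) (f : R -> R) (t : R) : R :=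
  f t - 1 / (2 * sqrt (1 + (Derive f t) ^ 2)) *
      ((t ^ 2 + f t ^ 2 - Rr ^ 2) / (Rr - alpha_f f t)).

Definition equidistant_function (Rr : R) (G : R -> R) : Prop :=
  exists f, admissible Rr f /\
    forall p : pt, equidistant_set (disk Rr) (epigraph f) p <-> snd p = G (fst p).

Definition h_of (Rr : R) (G : R -> R) (x : R) : R :=
  x - (sqrt (x ^ 2 + G x ^ 2) - Rr) / sqrt (x ^ 2 + G x ^ 2) *
      ((x * (1 - (Derive G x) ^ 2) + 2 * G x * Derive G x) / (1 + (Derive G x) ^ 2)).

Definition rbar_interval (a b : Rbar) (t : R) : Prop := Rbar_lt a t /\ Rbar_lt t b.

(* Main.v *)
Require Import Defs.
From Stdlib Require Import Reals Lra Psatz.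
From Coquelicot Require Import Coquelicot.
Open Scope R_scope.

Lemma glb_eq (p : pt) (A : pt -> Prop) (s : R) :
  (exists q, A q /\ s = edist p q) -> (forall q, A q -> s <= edist p q) ->
  dist_set p A = Finite s.
Proof.
  intros [q [Aq Es]] Hlb. unfold dist_set. apply is_glb_Rbar_unique. split.
  - intros r [z [Az ->]]. simpl. now apply Hlb.
  - intros b Hb. apply Hb. exists q. now split.
Qed.

Lemma edist_ge (p q : pt) (s : R) : 0 <= s ->
  s ^ 2 <= (fst p - fst q) ^ 2 + (snd p - snd q) ^ 2 -> s <= edist p q.
Proof.
  intros Hs H. unfold edist. rewrite <- (sqrt_pow2 s Hs). now apply sqrt_le_1_alt.
Qed.

Lemma edist_eq (p q : pt) (s : R) : 0 <= s ->
  (fst p - fst q) ^ 2 + (snd p - snd q) ^ 2 = s ^ 2 -> edist p q = s.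
Proof.
  intros Hs H. unfold edist. rewrite H. now apply sqrt_pow2.
Qed.

Lemma ext_max (g : R -> R) (x0 l : R) :
  (forall x, g x <= g x0) -> is_derive g x0 l -> l = 0.
Proof.
  intros Hm Hd. apply is_derive_Reals in Hd.
  set (pr := exist (fun l => derivable_pt_lim g x0 l) l Hd : derivable_pt g x0).
  assert (E : derive_pt g x0 pr = l) by reflexivity.
  rewrite <- E. apply (deriv_maximum g (x0 - 1) (x0 + 1)); try lra.
  intros; apply Hm.
Qed.

Lemma ext_min (g : R -> R) (x0 l : R) :
  (forall x, g x0 <= g x) -> is_derive g x0 l -> l = 0.
Proof.
  intros Hm Hd. apply is_derive_Reals in Hd.
  set (pr := exist (fun l => derivable_pt_lim g x0 l) l Hd : derivable_pt g x0).
  assert (E : derive_pt g x0 pr = l) by reflexivity.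
  rewrite <- E. apply (deriv_minimum g (x0 - 1) (x0 + 1)); try lra.
  intros; apply Hm.
Qed.

Lemma tangent_aux (f : R -> R) (t y l : R) : convex_fun f -> derivable_pt_lim f t l ->
  f t + l * (y - t) <= f y.
Proof.
  intros Hc D.
  destruct (Rle_or_lt (f t + l * (y - t)) (f y)) as [H|H]; [exact H|exfalso].
  destruct (Req_dec y t) as [Eyt|Hd0]. { subst y. lra. }
  assert (Ad : 0 < Rabs (y - t)) by (apply Rabs_pos_lt; lra).
  assert (He : 0 < f t + l * (y - t) - f y) by lra.
  remember (f t + l * (y - t) - f y) as e eqn:Ee0.
  destruct (D (e / Rabs (y - t))) as [delta Hdel].
  { apply Rdiv_lt_0_compat; lra. }
  generalize (cond_pos delta) (Hdel); clear Hdel. generalize (pos delta). clear delta.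
  intros delta Hdp Hdel.
  assert (Hl0 : 0 < Rmin (1/2) (delta / (2 * Rabs (y - t)))).
  { apply Rmin_glb_lt; [lra|]. apply Rdiv_lt_0_compat; lra. }
  assert (Hl1 : Rmin (1/2) (delta / (2 * Rabs (y - t))) <= 1/2) by apply Rmin_l.
  assert (Hl2 : Rmin (1/2) (delta / (2 * Rabs (y - t))) <= delta / (2 * Rabs (y - t))) by apply Rmin_r.
  generalize dependent (Rmin (1/2) (delta / (2 * Rabs (y - t)))). intros lam Hl0 Hl1 Hl2.
  assert (Hl2' : lam * (2 * Rabs (y - t)) <= delta).
  { apply (Rmult_le_compat_r (2 * Rabs (y - t))) in Hl2; [|lra].
    unfold Rdiv in Hl2. rewrite Rmult_assoc, Rinv_l in Hl2; lra. }
  assert (Hh0 : lam * (y - t) <> 0) by (apply Rmult_integral_contrapositive; split; lra).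
  assert (Hh : Rabs (lam * (y - t)) < delta).
  { rewrite Rabs_mult, (Rabs_pos_eq lam) by lra. nra. }
  specialize (Hdel (lam * (y - t)) Hh0 Hh).
  assert (Eq : f (t + lam * (y - t)) - f t = (f (t + lam * (y - t)) - f t) / (lam * (y - t)) * (lam * (y - t)))
    by (field; repeat split; auto; lra).
  generalize dependent ((f (t + lam * (y - t)) - f t) / (lam * (y - t))). intros q Hdel Eq.
  pose proof (Hc y t lam ltac:(lra)) as Hcv.
  replace (lam * y + (1 - lam) * t) with (t + lam * (y - t)) in Hcv by ring.
  apply Rabs_def2 in Hdel. destruct Hdel as [Hd1 Hd2].
  assert (Ee : e / Rabs (y - t) * Rabs (y - t) = e) by (field; lra).
  generalize dependent (e / Rabs (y - t)). intros eps Hd1 Hd2 Ee.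
  destruct (Rlt_or_le 0 (y - t)) as [Dp|Dn].
  - rewrite Rabs_pos_eq in Ee by lra.
    assert ((q - l) * (lam * (y - t)) > - eps * (lam * (y - t))).
    { apply Rmult_gt_compat_r; [nra| lra]. }
    nra.
  - assert (Dn' : y - t < 0) by lra.
    rewrite Rabs_left in Ee by lra.
    assert ((q - l) * (lam * (y - t)) > eps * (lam * (y - t))).
    { assert (0 < (eps - (q - l)) * (- (lam * (y - t)))) by (apply Rmult_lt_0_compat; nra). nra. }
    nra.
Qed.

Lemma tangent (f : R -> R) (t y : R) : convex_fun f -> ex_derive f t ->
  f t + Derive f t * (y - t) <= f y.
Proof.
  intros Hc Hd. apply tangent_aux; auto. apply is_derive_Reals, Derive_correct, Hd.
Qed.


Lemma cont_of_der (f : R -> R) x : ex_derive f x -> continuity_pt f x.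
Proof. intros H. apply continuity_pt_filterlim. exact (@ex_derive_continuous R_AbsRing R_NormedModule f x H). Qed.

Lemma minim (f : R -> R) (p1 p2 : R) : convex_fun f -> (forall x, ex_derive f x) ->
  p2 < f p1 -> exists t c, 0 < c /\ p1 = t + c * Derive f t /\ p2 = f t - c.
Proof.
  intros Hc Hd Hp.
  set (g := fun u => (p1 - u) ^ 2 + (p2 - f u) ^ 2).
  assert (Dg : forall u : R, is_derive g u (-2 * (p1 - u) - 2 * (p2 - f u) * Derive f u)).
  { intro u. unfold g. auto_derive. apply Hd. change (fun x : R => f x) with f. lra. }
  set (M := Rabs (f p1 - p2) + 1).
  assert (HM : 0 < M) by (unfold M; pose proof (Rabs_pos (f p1 - p2)); lra).
  destruct (continuity_ab_min g (p1 - M) (p1 + M)) as [ts [Hmin Hint]]; [lra| |].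
  { intros c _. apply cont_of_der. eexists. apply Dg. }
  assert (Hglob : forall u, g ts <= g u).
  { intro u. destruct (Rle_dec (p1 - M) u) as [H1|H1];
      [destruct (Rle_dec u (p1 + M)) as [H2|H2]|].
    - apply Hmin; lra.
    - apply Rnot_le_lt in H2. assert (g ts <= g p1) by (apply Hmin; lra).
      unfold g in *. assert (g1 : (p1 - p1) ^ 2 + (p2 - f p1) ^ 2 = Rabs (f p1 - p2) ^ 2).
      { rewrite pow2_abs. ring. }
      assert (M ^ 2 < (p1 - u) ^ 2).
      { assert (0 < (u - p1 - M) * (u - p1 + M)) by (apply Rmult_lt_0_compat; lra). nra. }
      assert (Rabs (f p1 - p2) ^ 2 <= M ^ 2) by (unfold M; pose proof (Rabs_pos (f p1 - p2)); nra).
      pose proof (pow2_ge_0 (p2 - f u)). lra.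
    - apply Rnot_le_lt in H1. assert (g ts <= g p1) by (apply Hmin; lra).
      unfold g in *. assert (g1 : (p1 - p1) ^ 2 + (p2 - f p1) ^ 2 = Rabs (f p1 - p2) ^ 2).
      { rewrite pow2_abs. ring. }
      assert (M ^ 2 < (p1 - u) ^ 2).
      { assert (0 < (p1 - u - M) * (p1 - u + M)) by (apply Rmult_lt_0_compat; lra). nra. }
      assert (Rabs (f p1 - p2) ^ 2 <= M ^ 2) by (unfold M; pose proof (Rabs_pos (f p1 - p2)); nra).
      pose proof (pow2_ge_0 (p2 - f u)). lra. }
  pose proof (ext_min g ts _ Hglob (Dg ts)) as Hz.
  exists ts, (f ts - p2).
  assert (E1 : p1 = ts + (f ts - p2) * Derive f ts) by lra.
  split; [|split; [exact E1|ring]].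
  destruct (Rlt_or_le 0 (f ts - p2)) as [Hpos|Hneg]; [exact Hpos|exfalso].
  assert (Hcont : continuity f) by (intro x; apply cont_of_der, Hd).
  destruct (IVT_gen f ts p1 p2 Hcont) as [u [Hu Hfu]].
  { split; [apply Rle_trans with (f ts); [apply Rmin_l|lra]
           |apply Rle_trans with (f p1); [lra|apply Rmax_r]]. }
  pose proof (Hglob u) as Gu. unfold g in Gu. rewrite Hfu in Gu.
  assert (Hb : (p1 - u) ^ 2 <= (p1 - ts) ^ 2).
  { unfold Rmin, Rmax in Hu. destruct (Rle_dec ts p1); nra. }
  assert (Hc0 : f ts - p2 = 0) by nra.
  assert (ts = p1) by nra. subst ts. lra.
Qed.


Lemma distK_out (Rr : R) (p : pt) : 0 <= Rr -> Rr ^ 2 < fst p ^ 2 + snd p ^ 2 ->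
  dist_set p (disk Rr) = Finite (sqrt (fst p ^ 2 + snd p ^ 2) - Rr).
Proof.
  destruct p as [p1 p2]; cbn [fst snd]. intros HR Hp.
  assert (Hr2 : sqrt (p1 ^ 2 + p2 ^ 2) ^ 2 = p1 ^ 2 + p2 ^ 2) by (apply pow2_sqrt; nra).
  assert (Hr0 : 0 <= sqrt (p1 ^ 2 + p2 ^ 2)) by apply sqrt_pos.
  generalize dependent (sqrt (p1 ^ 2 + p2 ^ 2)). intros r Hr2 Hr0.
  assert (HrR : Rr < r) by nra.
  apply glb_eq.
  - exists (Rr / r * p1, Rr / r * p2). split.
    + unfold disk; cbn [fst snd]. replace ((Rr / r * p1) ^ 2 + (Rr / r * p2) ^ 2) with (Rr ^ 2 / r ^ 2 * (p1 ^ 2 + p2 ^ 2)) by (field; lra).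
      rewrite <- Hr2. right. field. lra.
    + symmetry. apply edist_eq; cbn [fst snd]; [lra|].
      replace ((p1 - Rr / r * p1) ^ 2 + (p2 - Rr / r * p2) ^ 2) with ((r - Rr) ^ 2 / r ^ 2 * (p1 ^ 2 + p2 ^ 2)) by (field; lra).
      rewrite <- Hr2. field. lra.
  - intros [z1 z2]. unfold disk; cbn [fst snd]. intros Hz.
    apply edist_ge; cbn [fst snd]; [lra|].
    assert (Hm2 : sqrt (z1 ^ 2 + z2 ^ 2) ^ 2 = z1 ^ 2 + z2 ^ 2) by (apply pow2_sqrt; nra).
    assert (Hm0 : 0 <= sqrt (z1 ^ 2 + z2 ^ 2)) by apply sqrt_pos.
    generalize dependent (sqrt (z1 ^ 2 + z2 ^ 2)). intros m Hm2 Hm0.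
    assert (HmR : m <= Rr). { destruct (Rle_or_lt m Rr) as [?|Hlt]; [auto|]. assert (0 < (m - Rr) * (m + Rr)) by (apply Rmult_lt_0_compat; lra). nra. }
    assert (Lag : (p1 * z1 + p2 * z2) ^ 2 <= (r * m) ^ 2).
    { replace ((r * m) ^ 2) with (r ^ 2 * m ^ 2) by ring. rewrite Hr2, Hm2.
      pose proof (pow2_ge_0 (p1 * z2 - p2 * z1)). nra. }
    assert (CS : p1 * z1 + p2 * z2 <= r * m). { destruct (Rle_or_lt (p1 * z1 + p2 * z2) (r * m)) as [?|Hlt]; [auto|]. assert (0 <= r * m) by (apply Rmult_le_pos; lra). assert (0 < (p1 * z1 + p2 * z2 - r * m) * (p1 * z1 + p2 * z2 + r * m)) by (apply Rmult_lt_0_compat; lra). nra. }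
    nra.
Qed.

Lemma distK_in (Rr : R) (p : pt) : disk Rr p -> dist_set p (disk Rr) = Finite 0.
Proof.
  intros H. apply glb_eq.
  - exists p. split; auto. symmetry. apply edist_eq; [lra|]. ring.
  - intros q _. unfold edist. apply sqrt_pos.
Qed.

Lemma distL_in (f : R -> R) (p : pt) : epigraph f p -> dist_set p (epigraph f) = Finite 0.
Proof.
  intros H. apply glb_eq.
  - exists p. split; auto. symmetry. apply edist_eq; [lra|]. ring.
  - intros q _. unfold edist. apply sqrt_pos.
Qed.

Lemma foot (f : R -> R) (t c : R) (z : pt) : convex_fun f -> ex_derive f t -> 0 <= c ->
  epigraph f z ->
  (c * sqrt (1 + Derive f t ^ 2)) ^ 2 <=
  (t + c * Derive f t - fst z) ^ 2 + (f t - c - snd z) ^ 2.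
Proof.
  intros Hc Hd Hc0 Hz. destruct z as [z1 z2]; unfold epigraph in Hz; cbn [fst snd] in *.
  pose proof (tangent f t z1 Hc Hd) as T.
  rewrite Rpow_mult_distr, pow2_sqrt by nra.
  generalize dependent (Derive f t). intros l T.
  assert (0 <= c * (l * (t - z1) - f t + z2)) by (apply Rmult_le_pos; nra).
  pose proof (pow2_ge_0 (t - z1)). pose proof (pow2_ge_0 (f t - z2)). nra.
Qed.


Definition nf (f : R -> R) t := sqrt (1 + Derive f t ^ 2).
Definition sf Rr (f : R -> R) t := (t ^ 2 + f t ^ 2 - Rr ^ 2) / (2 * (Rr - alpha_f f t)).

Lemma nf_pos f t : 1 <= nf f t.
Proof.
  unfold nf. rewrite <- sqrt_1 at 1. apply sqrt_le_1_alt. pose proof (pow2_ge_0 (Derive f t)). lra.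
Qed.

Lemma nf_sq f t : nf f t ^ 2 = 1 + Derive f t ^ 2.
Proof. unfold nf. apply pow2_sqrt. pose proof (pow2_ge_0 (Derive f t)). lra. Qed.

Lemma alpha_eq f t : alpha_f f t * nf f t = t * Derive f t - f t.
Proof. unfold alpha_f. fold (nf f t). pose proof (nf_pos f t). field. lra. Qed.

Lemma param_props Rr f t : 0 < Rr -> admissible Rr f -> D_f Rr f t ->
  0 < sf Rr f t /\ x_f Rr f t = t + (sf Rr f t / nf f t) * Derive f t /\
  y_f Rr f t = f t - sf Rr f t / nf f t /\
  x_f Rr f t ^ 2 + y_f Rr f t ^ 2 = (Rr + sf Rr f t) ^ 2.
Proof.
  intros HR [HC2 [Hcv [Hpos Hout]]] HD. unfold D_f in HD.
  pose proof (nf_pos f t) as Hn. pose proof (nf_sq f t) as Hn2. pose proof (alpha_eq f t) as Ha.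
  pose proof (Hout t) as Ho.
  assert (Hs : 0 < sf Rr f t) by (unfold sf; apply Rdiv_lt_0_compat; lra).
  assert (Es : sf Rr f t * (2 * (Rr - alpha_f f t)) = t ^ 2 + f t ^ 2 - Rr ^ 2) by (unfold sf; field; lra).
  assert (Ex : x_f Rr f t = t + (sf Rr f t / nf f t) * Derive f t).
  { unfold x_f, sf. fold (nf f t). field. split; lra. }
  assert (Ey : y_f Rr f t = f t - sf Rr f t / nf f t).
  { unfold y_f, sf. fold (nf f t). field. split; lra. }
  split; [exact Hs|]. split; [exact Ex|]. split; [exact Ey|].
  rewrite Ex, Ey. clear Ex Ey.
  generalize dependent (sf Rr f t). generalize dependent (nf f t). generalize dependent (alpha_f f t).
  generalize dependent (Derive f t). intros l A HD n Hn Hn2 Ha s Hs Es.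
  assert (E2 : (t + s / n * l) ^ 2 + (f t - s / n) ^ 2 =
     t ^ 2 + f t ^ 2 + 2 * (s / n) * (t * l - f t) + (s / n) ^ 2 * (1 + l ^ 2)) by ring.
  rewrite E2, <- Ha, <- Hn2. field_simplify; [|lra]. nra.
Qed.

Lemma distL_foot (f : R -> R) (t c : R) : convex_fun f -> ex_derive f t -> 0 <= c ->
  dist_set (t + c * Derive f t, f t - c) (epigraph f) = Finite (c * nf f t).
Proof.
  intros Hc Hd Hc0. pose proof (nf_pos f t). apply glb_eq.
  - exists (t, f t). split; [unfold epigraph; cbn [fst snd]; lra|].
    symmetry. apply edist_eq; [nra|]. cbn [fst snd].
    rewrite Rpow_mult_distr, nf_sq. ring.
  - intros z Hz. apply edist_ge; [nra|]. cbn [fst snd]. apply foot; auto.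
Qed.

Lemma param_equid Rr f t : 0 < Rr -> admissible Rr f -> D_f Rr f t ->
  equidistant_set (disk Rr) (epigraph f) (x_f Rr f t, y_f Rr f t).
Proof.
  intros HR Ha HD. destruct (param_props Rr f t HR Ha HD) as [Hs [Ex [Ey Ep]]].
  pose proof (nf_pos f t) as Hn.
  destruct Ha as [[Hd _] [Hcv _]].
  unfold equidistant_set. rewrite distK_out; cbn [fst snd]; [|lra|rewrite Ep; nra].
  rewrite Ep, sqrt_pow2 by lra. rewrite Ex, Ey.
  rewrite distL_foot; auto. 2: apply Rdiv_le_0_compat; lra.
  f_equal. field. lra.
Qed.

Lemma equid_param Rr f (p : pt) : 0 < Rr -> admissible Rr f ->
  equidistant_set (disk Rr) (epigraph f) p -> exists t, D_f Rr f t /\ p = (x_f Rr f t, y_f Rr f t).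
Proof.
  intros HR Ha Heq. pose proof Ha as Ha'. destruct Ha as [[Hd _] [Hcv [Hpos Hout]]].
  unfold equidistant_set in Heq. destruct p as [p1 p2].
  destruct (Rle_or_lt (f p1) p2) as [Hin|Hnin].
  - exfalso. rewrite (distL_in f) in Heq by (unfold epigraph; cbn [fst snd]; lra).
    pose proof (Hout p1). pose proof (Hpos p1).
    assert (Hr : Rr ^ 2 < p1 ^ 2 + p2 ^ 2) by nra.
    rewrite distK_out in Heq by (cbn [fst snd]; lra). cbn [fst snd] in Heq.
    apply Rbar_finite_eq in Heq. rename Heq into E.
    assert (sqrt (p1 ^ 2 + p2 ^ 2) = Rr) by lra.
    assert (sqrt (p1 ^ 2 + p2 ^ 2) ^ 2 = p1 ^ 2 + p2 ^ 2) by (apply pow2_sqrt; nra).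
    rewrite H1 in H2. lra.
  - destruct (minim f p1 p2 Hcv Hd Hnin) as [t [c [Hc [E1 E2]]]].
    pose proof (nf_pos f t) as Hn. pose proof (nf_sq f t) as Hn2. pose proof (alpha_eq f t) as Hal.
    subst p1 p2.
    rewrite distL_foot in Heq by (auto; lra).
    destruct (Rle_or_lt ((t + c * Derive f t) ^ 2 + (f t - c) ^ 2) (Rr ^ 2)) as [Hk|Hk].
    + rewrite distK_in in Heq by (unfold disk; cbn [fst snd]; lra).
      apply Rbar_finite_eq in Heq. nra.
    + rewrite distK_out in Heq by (cbn [fst snd]; lra). cbn [fst snd] in Heq.
      apply Rbar_finite_eq in Heq. rename Heq into E.
      set (s := c * nf f t) in *.
      assert (Hr2 : (Rr + s) ^ 2 = (t + c * Derive f t) ^ 2 + (f t - c) ^ 2).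
      { replace (Rr + s) with (sqrt ((t + c * Derive f t) ^ 2 + (f t - c) ^ 2)) by lra.
        apply pow2_sqrt. nra. }
      assert (Hs : 0 < s) by (unfold s; nra).
      assert (Key : t ^ 2 + f t ^ 2 - Rr ^ 2 = 2 * s * (Rr - alpha_f f t)).
      { unfold s. 
        assert (X : (t + c * Derive f t) ^ 2 + (f t - c) ^ 2 =
           t ^ 2 + f t ^ 2 + 2 * c * (t * Derive f t - f t) + c ^ 2 * (1 + Derive f t ^ 2)) by ring.
        rewrite X, <- Hal, <- Hn2 in Hr2. unfold s in Hr2. nra. }
      pose proof (Hout t).
      assert (HD : D_f Rr f t).
      { unfold D_f. destruct (Rlt_or_le (alpha_f f t) Rr); [auto|]. nra. }
      exists t. split; [exact HD|].
      destruct (param_props Rr f t HR Ha' HD) as [_ [Ex [Ey _]]].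
      assert (Hsf : sf Rr f t = s). { unfold sf. rewrite Key. field. unfold D_f in HD. lra. }
      rewrite Ex, Ey, Hsf. unfold s. f_equal; field; lra.
Qed.


Lemma alg_refl (X Y g T F r s Rr : R) :
  0 < Rr -> 0 < s -> r = Rr + s -> r ^ 2 = X ^ 2 + Y ^ 2 ->
  (X - T) ^ 2 + (Y - F) ^ 2 = s ^ 2 ->
  (X + Y * g) / r - ((X - T) + (Y - F) * g) / s = 0 ->
  T ^ 2 + F ^ 2 > Rr ^ 2 ->
  X - (r - Rr) / r * ((X * (1 - g ^ 2) + 2 * Y * g) / (1 + g ^ 2)) = T.
Proof.
  intros HR Hs Er Hr2 Hab Hd Hout.
  assert (Hr : 0 < r) by lra.
  assert (Hg : 0 < 1 + g ^ 2) by (pose proof (pow2_ge_0 g); lra).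
  replace (r - Rr) with s by lra.
  set (k := s * (X + Y * g) / r).
  assert (Ea : X - T = k - (Y - F) * g).
  { assert (E0 : ((X - T) + (Y - F) * g) / s = (X + Y * g) / r) by lra.
    assert (E1 : (X - T) + (Y - F) * g = s * ((X + Y * g) / r)) by (rewrite <- E0; field; lra).
    unfold k. replace (s * (X + Y * g) / r) with (s * ((X + Y * g) / r)) by (field; lra). lra. }
  set (b1 := s * Y / r).
  set (b2 := 2 * k * g / (1 + g ^ 2) - b1).
  assert (Hb1 : (k - b1 * g) ^ 2 + b1 ^ 2 = s ^ 2).
  { unfold k, b1. replace ((s * (X + Y * g) / r - s * Y / r * g) ^ 2 + (s * Y / r) ^ 2)
      with (s ^ 2 * (X ^ 2 + Y ^ 2) / r ^ 2) by (field; lra). rewrite <- Hr2. field. lra. }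
  assert (Db2 : b2 = 2 * k * g / (1 + g ^ 2) - b1) by reflexivity.
  clearbody b2.
  assert (S2 : (1 + g ^ 2) * b1 * b2 = 2 * k * g * b1 - (1 + g ^ 2) * b1 ^ 2) by (rewrite Db2; field; lra).
  assert (S1 : (1 + g ^ 2) * (b1 + b2) = 2 * k * g) by (rewrite Db2; field; lra).
  assert (Hab' : (k - (Y - F) * g) ^ 2 + (Y - F) ^ 2 = s ^ 2) by (rewrite <- Ea; exact Hab).
  assert (Q : (1 + g ^ 2) * ((Y - F) - b1) * ((Y - F) - b2) = 0).
  { assert (Z : (1 + g ^ 2) * ((Y - F) - b1) * ((Y - F) - b2) =
       (1 + g ^ 2) * (Y - F) ^ 2 - (Y - F) * ((1 + g ^ 2) * (b1 + b2)) + (1 + g ^ 2) * b1 * b2) by ring.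
    rewrite Z, S1, S2. nra. }
  assert (Hne : (Y - F) - b1 <> 0).
  { intro E. assert (EF : F = Y - b1) by lra.
    assert (ET : T = X - (k - b1 * g)) by (rewrite (Rminus_diag_uniq _ _ E) in Ea; lra).
    assert (T ^ 2 + F ^ 2 = Rr ^ 2).
    { rewrite EF, ET. unfold k, b1.
      replace ((X - (s * (X + Y * g) / r - s * Y / r * g)) ^ 2 + (Y - s * Y / r) ^ 2)
        with ((r - s) ^ 2 * (X ^ 2 + Y ^ 2) / r ^ 2) by (field; lra).
      rewrite <- Hr2. replace (r - s) with Rr by lra. field. lra. }
    lra. }
  assert (Eb : Y - F = b2).
  { apply Rminus_diag_uniq. apply Rmult_integral in Q. destruct Q as [Q|Q]; [|exact Q].
    apply Rmult_integral in Q. destruct Q; [lra|contradiction]. }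
  assert (ET : T = X - (k - b2 * g)) by (rewrite <- Eb; lra).
  rewrite ET, Db2. unfold b1, k. field. split; lra.
Qed.


Lemma eq_bound Rr f (p q : pt) : 0 < Rr -> admissible Rr f ->
  equidistant_set (disk Rr) (epigraph f) p -> epigraph f q ->
  sqrt (fst p ^ 2 + snd p ^ 2) - Rr <= edist p q.
Proof.
  intros HR Ha Heq Hq.
  destruct (equid_param Rr f p HR Ha Heq) as [t [HD Ep]].
  destruct (param_props Rr f t HR Ha HD) as [Hs [_ [_ E2]]].
  assert (Hout : Rr ^ 2 < fst p ^ 2 + snd p ^ 2) by (rewrite Ep; cbn [fst snd]; rewrite E2; nra).
  unfold equidistant_set in Heq. rewrite distK_out in Heq by (auto; lra).
  destruct (Glb_Rbar_correct (fun r => exists q, epigraph f q /\ r = edist p q)) as [Hlb _].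
  specialize (Hlb (edist p q) (ex_intro _ q (conj Hq eq_refl))).
  unfold dist_set in Heq. rewrite <- Heq in Hlb. exact Hlb.
Qed.

Lemma hC Rr f G : 0 < Rr -> admissible Rr f -> C2 G -> (forall x, x ^ 2 + G x ^ 2 > 0) ->
  (forall p, equidistant_set (disk Rr) (epigraph f) p <-> snd p = G (fst p)) ->
  forall t, D_f Rr f t -> h_of Rr G (x_f Rr f t) = t.
Proof.
  intros HR Ha HG HGp Heqv t HD.
  destruct (param_props Rr f t HR Ha HD) as [Hs [Ex [Ey Ep]]].
  pose proof (nf_pos f t) as Hn. pose proof (nf_sq f t) as Hn2.
  pose proof (param_equid Rr f t HR Ha HD) as Hpe.
  apply Heqv in Hpe. cbn [fst snd] in Hpe.
  set (x0 := x_f Rr f t) in *.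
  set (s := sf Rr f t) in *.
  assert (Hr : sqrt (x0 ^ 2 + G x0 ^ 2) = Rr + s) by (rewrite <- Hpe, Ep; apply sqrt_pow2; lra).
  assert (E : (x0 - t) ^ 2 + (G x0 - f t) ^ 2 = s ^ 2).
    { rewrite <- Hpe, Ey. rewrite Ex at 1.
      replace ((t + s / nf f t * Derive f t - t) ^ 2 + (f t - s / nf f t - f t) ^ 2)
        with (s ^ 2 / nf f t ^ 2 * (1 + Derive f t ^ 2)) by (field; lra).
      rewrite <- Hn2. field. lra. }
  assert (Hq : sqrt ((x0 - t) ^ 2 + (G x0 - f t) ^ 2) = s).
  { rewrite E. apply sqrt_pow2. lra. }
  set (phi := fun x => sqrt (x ^ 2 + G x ^ 2) - Rr - sqrt ((x - t) ^ 2 + (G x - f t) ^ 2)).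
  assert (Hmax : forall x, phi x <= phi x0).
  { intro x. unfold phi. rewrite Hr, Hq.
    assert (Hb := eq_bound Rr f (x, G x) (t, f t) HR Ha ltac:(apply Heqv; reflexivity)
                   ltac:(unfold epigraph; cbn [fst snd]; lra)).
    unfold edist in Hb. cbn [fst snd] in Hb. lra. }
  destruct HG as [HG1 _].
  assert (Hq0 : 0 < (x0 - t) ^ 2 + (G x0 - f t) ^ 2).
  { rewrite E. nra. }
  assert (Hd : is_derive phi x0
     ((x0 + G x0 * Derive G x0) / sqrt (x0 ^ 2 + G x0 ^ 2)
      - ((x0 - t) + (G x0 - f t) * Derive G x0) / sqrt ((x0 - t) ^ 2 + (G x0 - f t) ^ 2))).
  { unfold phi. auto_derive.
    - repeat split; auto. apply HGp.
    - change (fun x : R => G x) with G. replace (x0 * (x0 * 1) + G x0 * (G x0 * 1)) with (x0 ^ 2 + G x0 ^ 2) by ring. replace ((x0 + - t) * ((x0 + - t) * 1) + (G x0 + - f t) * ((G x0 + - f t) * 1)) with ((x0 - t) ^ 2 + (G x0 - f t) ^ 2) by ring. rewrite Hr, Hq. field. lra. }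
  pose proof (ext_max phi x0 _ Hmax Hd) as Hz.
  rewrite Hq in Hz.
  unfold h_of.
  apply (alg_refl x0 (G x0) (Derive G x0) t (f t) (sqrt (x0 ^ 2 + G x0 ^ 2)) s Rr); auto.
  - rewrite pow2_sqrt; [ring|]. pose proof (HGp x0); lra.
  - destruct Ha as [_ [_ [_ Ho]]]. apply Ho.
Qed.


Theorem theorem9 (Rr : R) (G : R -> R) (a b : Rbar) (hinv : R -> R) :
  0 < Rr ->
  C2 G ->
  (forall x, x ^ 2 + G x ^ 2 > 0) ->
  Rbar_lt a 0 -> Rbar_lt 0 b ->
  (* h is a bijection from R onto J = (a,b), with inverse hinv *)
  (forall x, rbar_interval a b (h_of Rr G x)) ->
  (forall x, hinv (h_of Rr G x) = x) ->
  (forall t, rbar_interval a b t -> h_of Rr G (hinv t) = t) ->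
  (forall x, Derive (h_of Rr G) x <> 0) ->
  (equidistant_function Rr G <->
   exists f, admissible Rr f /\
     (forall t, D_f Rr f t <-> rbar_interval a b t) /\
     (forall t, rbar_interval a b t ->
        x_f Rr f t = hinv t /\ y_f Rr f t = G (hinv t))).
Proof.
  intros HR HG HGp _ _ Hrange Hinv1 Hinv2 _. split.
  - intros [f [Ha Heqv]]. exists f. split; [exact Ha|].
    pose proof (hC Rr f G HR Ha HG HGp Heqv) as C.
    assert (DJ : forall t, D_f Rr f t <-> rbar_interval a b t).
    { intro t. split.
      - intro HD. rewrite <- (C t HD). apply Hrange.
      - intro HJ. set (x := hinv t).
        assert (Hx : h_of Rr G x = t) by (apply Hinv2; auto).
        assert (He : equidistant_set (disk Rr) (epigraph f) (x, G x)) by (apply Heqv; reflexivity).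
        destruct (equid_param Rr f _ HR Ha He) as [t' [HD' Ep]].
        injection Ep. intros _ Ex.
        assert (t' = t) by (rewrite <- Hx, Ex; symmetry; apply C; auto).
        subst t'. exact HD'. }
    split; [exact DJ|].
    intros t HJ. apply DJ in HJ.
    pose proof (param_equid Rr f t HR Ha HJ) as Hpe. apply Heqv in Hpe. cbn [fst snd] in Hpe.
    assert (Hx : hinv t = x_f Rr f t) by (pose proof (Hinv1 (x_f Rr f t)) as H; rewrite (C t HJ) in H; exact H).
    rewrite Hx. split; auto.
  - intros [f [Ha [DJ Hxy]]]. exists f. split; [exact Ha|].
    intros [p1 p2]. cbn [fst snd]. split.
    + intro He. destruct (equid_param Rr f _ HR Ha He) as [t [HD Ep]].
      apply DJ in HD. destruct (Hxy t HD) as [Ex Ey].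
      injection Ep. intros E2 E1. rewrite E1, E2, Ey, Ex. reflexivity.
    + intro Hp. set (t := h_of Rr G p1).
      assert (HJ : rbar_interval a b t) by apply Hrange.
      destruct (Hxy t HJ) as [Ex Ey].
      assert (Hi : hinv t = p1) by apply Hinv1.
      rewrite Hi in Ex, Ey.
      assert (HD : D_f Rr f t) by (apply DJ; exact HJ).
      pose proof (param_equid Rr f t HR Ha HD) as Hpe.
      rewrite Ex, Ey, <- Hp in Hpe. exact Hpe.
Qed.
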